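(* Let $(X,\delta,c)$ be an accepting automaton over $\Sigma$ and let $\mu\mathrm{PL}(\delta,c)$ be as in the context. Then $\mu\mathrm{PL}(\delta,c)$ is minimal: for any two states $U,V$ of $\mu\mathrm{PL}(\delta,c)$, if $L(U)=L(V)$ then $U=V$.
   Context: $\Sigma$ is a finite alphabet, $\Sigma^\ast$ the free monoid with empty word $\epsilon$, $u^r$ the reversal of a word $u$. An accepting automaton is $(X,\delta,c)$ with $\delta:X\to X^\Sigma$ (extended to words by $\delta(x)(\epsilon)=x$, $\delta(x)(wa)=\delta(\delta(x)(w))(a)$) and $c\subseteq X$. Define $\widehat{\delta}:P(X)\to P(X)^\Sigma$ by $\widehat{\delta}(U)(a)=\{x\in X\mid\delta(x)(a)\in U\}$, extended to words in the same way, so that $\widehat{\delta}(U)(w)=\{x\mid\delta(x)(w^r)\in U\}$. Let $\langle c\rangle=\{\widehat{\delta}(c)(w)\mid w\in\Sigma^\ast\}$ and let $\approx$ be the congruence on $\Sigma^\ast$ given by $u\approx v$ iff $\widehat{\delta}(U)(u)=\widehat{\delta}(U)(v)$ for all $U\in\langle c\rangle$. $\mu\mathrm{PL}(\delta,c)$ is the accepting automaton with state space $P(\Sigma^\ast/{\approx})$, transition $\widehat{\sigma}(\mathcal{U})(u)=\{[w]\mid[wu^r]\in\mathcal{U}\}$ and final states $\{\mathcal{U}\mid[\epsilon]\in\mathcal{U}\}$. For a state $\mathcal{U}$, $L(\mathcal{U})=\{u\in\Sigma^\ast\mid[\epsilon]\in\widehat{\sigma}(\mathcal{U})(u)\}$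 is the language it accepts. *)

(* Defs.v *)
From mathcomp Require Import all_boot.
Set Implicit Arguments. Unset Strict Implicit. Unset Printing Implicit Defensive.

Section Automaton.
Variables (Sigma : finType) (X : Type) (delta : X -> Sigma -> X) (c : X -> Prop).

Definition word := seq Sigma.

Definition delta_w (x : X) (w : word) : X := foldl delta x w.

Definition dhat (U : X -> Prop) (a : Sigma) : X -> Prop := fun x => U (delta x a).

Definition dhat_w (U : X -> Prop) (w : word) : X -> Prop := foldl dhat U w.

Definition gen_c (U : X -> Prop) : Prop := exists w : word, U = dhat_w c w.

Definition approx (u v : word) : Prop :=
  forall U, gen_c U -> dhat_w U u = dhat_w U v.

(* The quotient Sigma^*/~ : the equivalence classes of ~ *)
Definition qcls : Type := { C : word -> Prop | exists w : word, C = approx w }.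

Definition cls (w : word) : qcls := exist _ (approx w) (ex_intro _ w erefl).

Definition muPL_state : Type := qcls -> Prop.

Definition sigma_hat (U : muPL_state) (u : word) : muPL_state :=
  fun k => exists w : word, k = cls w /\ U (cls (w ++ rev u)).

Definition muPL_final (U : muPL_state) : Prop := U (cls [::]).

Definition lang (U : muPL_state) : word -> Prop :=
  fun u => sigma_hat U u (cls [::]).

End Automaton.

(* Main.v *)
Require Import Defs.
From mathcomp Require Import all_boot.
From Stdlib Require Import FunctionalExtensionality PropExtensionality ProofIrrelevance.

Lemma cls_eq (Sigma : finType) (X : Type) (delta : X -> Sigma -> X)
    (c : X -> Prop) (u v : word Sigma) :
  approx delta c u = approx delta c v -> cls delta c u = cls delta c v.
Proof.
move=> H; rewrite /cls.
move: (ex_intro _ u erefl : exists w, approx delta c u = approx delta c w).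
move: (ex_intro _ v erefl : exists w, approx delta c v = approx delta c w).
rewrite H => p q; by rewrite (proof_irrelevance _ p q).
Qed.

Lemma qcls_cls (Sigma : finType) (X : Type) (delta : X -> Sigma -> X)
    (c : X -> Prop) (k : qcls delta c) : exists w, k = cls delta c w.
Proof.
case: k => C p; have [w Hw] := p; exists w; rewrite /cls.
move: p; rewrite Hw => p; by rewrite (proof_irrelevance _ p (ex_intro _ w erefl)).
Qed.

Lemma key (Sigma : finType) (X : Type) (delta : X -> Sigma -> X)
    (c : X -> Prop) (U : muPL_state delta c) (w0 : word Sigma) :
  U (cls delta c w0) <-> lang U (rev w0).
Proof.
split.
- move=> H; exists [::]; split => //; by rewrite cat0s revK.
- case=> w [Hw]; rewrite revK.
  have Hw' : approx delta c [::] = approx delta c w by have := f_equal (@proj1_sig _ _) Hw.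
  have Hrefl : approx delta c w [::].
    rewrite -Hw'; by move=> ?.
  suff -> : cls delta c (w ++ w0) = cls delta c w0 by [].
  apply: cls_eq; apply: functional_extensionality => t.
  apply: propositional_extensionality; rewrite /approx.
  have E : forall W, gen_c delta c W -> dhat_w delta (dhat_w delta W w) w0 = dhat_w delta W w0.
    by move=> W HW; rewrite (Hrefl W HW).
  have F : forall W, gen_c delta c W -> dhat_w delta W (w ++ w0) = dhat_w delta W w0.
    by move=> W HW; rewrite -(E W HW) /dhat_w foldl_cat.
  split=> H W HW; first by rewrite -(H W HW) F.
  by rewrite (F W HW) (H W HW).
Qed.

Theorem mainTheorem5 (Sigma : finType) (X : Type) (delta : X -> Sigma -> X)
    (c : X -> Prop) (U V : muPL_state delta c) :
  lang U = lang V -> U = V.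
Proof.
move=> H; apply: functional_extensionality => k.
have [w ->] := @qcls_cls _ _ delta c k.
apply: propositional_extensionality.
rewrite (key _ _ _ _ U) (key _ _ _ _ V) H; tauto.
Qed.
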